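(* Let $W,E_0,E\in\mathcal G$ with $W$ adjacent to $E_0$, $E$ distant from $E_0$, and $W$ not distant from $E$. Then $W\cap E$ is a point (i.e. $\dim(W\cap E)=1$).
   Context: $K$ is a (not necessarily commutative) field and $V$ is a left vector space over $K$ of arbitrary (possibly infinite) dimension with $\dim V>2$. $\mathcal G:=\{X\le V\mid X\cong V/X\}$, assumed nonempty. Points are $1$-dimensional subspaces. $X,Y\in\mathcal G$ are adjacent if $\dim((X+Y)/X)=\dim((X+Y)/Y)=1$ (equivalently $\dim(X/(X\cap Y))=\dim(Y/(X\cap Y))=1$), and distant if $V=X\oplus Y$. *)

(* Defs.v *)
From HB Require Import structures.
From mathcomp Require Import all_boot all_order all_algebra.
Set Implicit Arguments. Unset Strict Implicit. Unset Printing Implicit Defensive.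
Import GRing.Theory.
Local Open Scope ring_scope.

Definition division_ring (K : unitRingType) : Prop :=
  forall x : K, x != 0 -> x \is a GRing.unit.

Section Sub.
Variables (K : unitRingType) (V : lmodType K).

Definition subspace (X : V -> Prop) : Prop :=
  X 0 /\ (forall u v, X u -> X v -> X (u + v)) /\ (forall (a : K) u, X u -> X (a *: u)).

Definition capS (X Y : V -> Prop) : V -> Prop := fun v => X v /\ Y v.

(* B <= A subspaces; dim (A / B) = 1 : A/B is spanned by one nonzero class *)
Definition quot_dim1 (A B : V -> Prop) : Prop :=
  exists a, A a /\ ~ B a /\ forall x, A x -> exists (k : K) b, B b /\ x = b + k *: a.

(* dim X = 1 : X is a point, i.e. spanned by a single nonzero vector *)
Definition is_point (X : V -> Prop) : Prop :=
  exists p, p != 0 /\ forall x, X x <-> exists k : K, x = k *: p.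

(* dim V > 2 : V contains three linearly independent vectors *)
Definition dim_gt2 : Prop :=
  exists u v w : V, forall a b c : K, a *: u + b *: v + c *: w = 0 -> [/\ a = 0, b = 0 & c = 0].

(* X ≅ V/X : by the first isomorphism theorem, V/X ≅ X iff there is a linear
   endomorphism of V with kernel X and image X. *)
Definition in_G (X : V -> Prop) : Prop :=
  subspace X /\
  exists f : {linear V -> V},
    (forall v, f v = 0 <-> X v) /\ (forall x, X x <-> exists v, f v = x).

Definition adjacent (X Y : V -> Prop) : Prop :=
  quot_dim1 X (capS X Y) /\ quot_dim1 Y (capS X Y).

Definition distant (X Y : V -> Prop) : Prop :=
  (forall v, X v -> Y v -> v = 0) /\ (forall v, exists x y, X x /\ Y y /\ v = x + y).

End Sub.

(* Main.v *)
Require Import Defs.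
From HB Require Import structures.
From mathcomp Require Import all_boot all_order all_algebra.
From Stdlib Require Import Classical.
Import GRing.Theory.
Local Open Scope ring_scope.

Lemma sub_opp {K : unitRingType} {V : lmodType K} {X : V -> Prop} :
  subspace X -> forall u, X u -> X (- u).
Proof. by move=> [_ [_ S]] u Xu; rewrite -scaleN1r; apply: S. Qed.

Theorem lemma4p8 (K : unitRingType) (V : lmodType K)
  (hK : division_ring K) (hV : dim_gt2 V)
  (W E0 E : V -> Prop)
  (hW : in_G W) (hE0 : in_G E0) (hE : in_G E)
  (hadj : adjacent W E0) (hdist : distant E E0) (hnd : ~ distant W E) :
  is_point (capS W E).
Proof.
case: hW => sW _; case: hE => sE _; case: hE0 => sE0 _.
have [W0 [WD WS]] := sW; have [E00 [E0D E0S]] := sE0; have [Ez [ED ES]] := sE.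
case: hadj => [[w [Ww [nD Wdec]]] [a [E0a [naD E0dec]]]].
case: hdist => [dj sp].
have [e [e0 [Ee [E0e0 we]]]] := sp w.
have key : forall x, W x -> E x -> exists k, x = k *: e.
  move=> x Wx Ex; have [k [d [[Wd E0d] xE]]] := Wdec x Wx.
  rewrite xE in Ex *.
  exists k.
  have Hy : d + k *: e0 = 0.
    apply: dj.
      have -> : d + k *: e0 = (d + k *: w) - k *: e.
        by rewrite we scalerDr addrCA addrAC subrr add0r.
      exact: (ED _ _ Ex (sub_opp sE _ (ES k _ Ee))).
    exact: (E0D _ _ E0d (E0S k _ E0e0)).
  by rewrite we scalerDr addrCA Hy addr0.
case: (classic (W e)) => We.
  exists e; split.
    apply/eqP => e0'; apply: nD; split => //.
    by rewrite we e0' add0r.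
  move=> x; split; first by case=> Wx Ex; apply: key.
  by case=> k ->; split; [apply: WS | apply: ES].
exfalso; apply: hnd; split.
  move=> v Wv Ev; have [k vk] := key v Wv Ev.
  case: (eqVneq k 0) => [k0|kn0]; first by rewrite vk k0 scale0r.
  exfalso; apply: We.
  have -> : e = k^-1 *: v by rewrite vk scalerA mulVr ?scale1r //; apply: hK.
  by apply: WS.
move=> v; have [x1 [y1 [Ex1 [E0y1 ->]]]] := sp v.
have [k [d [[Wd E0d] ->]]] := E0dec y1 E0y1.
have [k' [d' [[Wd' E0d'] e0E]]] := E0dec e0 E0e0.
have kn0 : k' != 0.
  apply/eqP => k0; apply: We.
  have -> : e = w - e0 by rewrite we addrK.
  apply: (WD _ _ Ww); apply: sub_opp => //; by rewrite e0E k0 scale0r addr0.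
have uk : k' \is a GRing.unit by apply: hK.
set c := k * k'^-1.
exists (d + c *: (w - d')), (x1 - c *: e); split.
  exact: (WD _ _ Wd (WS c _ (WD _ _ Ww (sub_opp sW _ Wd')))).
split; first exact: (ED _ _ Ex1 (sub_opp sE _ (ES c _ Ee))).
have ha : k *: a = c *: (w - d') - c *: e.
  rewrite -scalerBr we e0E addrCA [d' + _ - _]addrAC subrr add0r addrAC subrr add0r.
  by rewrite scalerA /c mulrVK.
rewrite ha.
by rewrite addrA [x1 + d]addrC -!addrA; congr (_ + _); rewrite addrCA.
Qed.
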